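(* Let $A,B\in\{0,1\}^{m\times n}$ be such that $(A,B)$ is sorted-flushed. Then $cs(A)=cs(\bar B)$ if and only if $PC(A,B)$.
   Context: For $M\in\{0,1\}^{m\times n}$: $\bar M_{ij}=1-M_{ij}$; $cs(M)=(\sum_i M_{ij})_{j=1..n}$; $ars(M)=(i+\sum_j M_{ij})_{i=1..m}$; $acs(M)=(j+\sum_i M_{ij})_{j=1..n}$. $PC(A,B)$ means $\{acs(A)_1,\dots,acs(A)_n,ars(B)_1,\dots,ars(B)_m\}=\{1,\dots,m+n\}$. $M$ is bottom-left flushed if whenever $M_{ij}=1$, also $M_{i'j'}=1$ for all $i'\ge i$, $j'\le j$. The pair $(A,B)$ is sorted if $acs(A)$ and $ars(B)$ are both strictly increasing sequences; flushed if $B$ is bottom-left flushed; sorted-flushed if both. *)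

(* Defs.v *)
(* 0/1 matrices are 'M[bool]_(m,n); an entry counts as 1 iff it is true.
   Paper indices 1..m / 1..n correspond to ordinals 0..m-1 / 0..n-1, so the
   paper index of i : 'I_m is i.+1. *)
From mathcomp Require Import all_boot all_order all_algebra.
Set Implicit Arguments. Unset Strict Implicit. Unset Printing Implicit Defensive.

Definition mxbar m n (M : 'M[bool]_(m, n)) : 'M[bool]_(m, n) :=
  \matrix_(i, j) ~~ M i j.

Definition cs m n (M : 'M[bool]_(m, n)) : {ffun 'I_n -> nat} :=
  [ffun j => \sum_(i < m) (M i j : nat)].

Definition ars m n (M : 'M[bool]_(m, n)) (i : 'I_m) : nat :=
  i.+1 + \sum_(j < n) (M i j : nat).

Definition acs m n (M : 'M[bool]_(m, n)) (j : 'I_n) : nat :=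
  j.+1 + \sum_(i < m) (M i j : nat).

Definition PC m n (A B : 'M[bool]_(m, n)) : Prop :=
  [seq acs A j | j <- enum 'I_n] ++ [seq ars B i | i <- enum 'I_m]
    =i iota 1 (m + n).

Definition bottom_left_flushed m n (M : 'M[bool]_(m, n)) : Prop :=
  forall (i i' : 'I_m) (j j' : 'I_n),
    M i j -> (i <= i')%N -> (j' <= j)%N -> M i' j'.

Definition sorted_pair m n (A B : 'M[bool]_(m, n)) : Prop :=
  (forall j1 j2 : 'I_n, (j1 < j2)%N -> (acs A j1 < acs A j2)%N) /\
  (forall i1 i2 : 'I_m, (i1 < i2)%N -> (ars B i1 < ars B i2)%N).

Definition flushed_pair m n (A B : 'M[bool]_(m, n)) : Prop :=
  bottom_left_flushed B.

Definition sorted_flushed m n (A B : 'M[bool]_(m, n)) : Prop :=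
  sorted_pair A B /\ flushed_pair A B.

(* Main.v *)
Require Import Defs.
From mathcomp Require Import all_boot all_order all_algebra.
From mathcomp Require Import zify.

Lemma sum_cnt_le n k : \sum_(j < n) ((j <= k)%N : nat) = minn k.+1 n.
Proof.
elim: n => [|n IH]; first by rewrite big_ord0 minn0.
rewrite big_ord_recr /= IH; case: (leqP n k) => H /=; lia.
Qed.

Lemma sum_cnt_lt n k : \sum_(j < n) ((j < k)%N : nat) = minn k n.
Proof.
elim: n => [|n IH]; first by rewrite big_ord0 minn0.
rewrite big_ord_recr /= IH; case: (ltnP n k) => H /=; lia.
Qed.

Lemma sum_ge n (F : 'I_n -> bool) k : (k < n)%N ->
  (forall j : 'I_n, (j <= k)%N -> F j) -> (k.+1 <= \sum_j (F j : nat))%N.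
Proof.
move=> kn H; apply: (@leq_trans (\sum_(j < n) ((j <= k)%N : nat))).
  by rewrite sum_cnt_le; lia.
apply: leq_sum => j _; case E: (j <= k)%N => //=; by rewrite H.
Qed.

Lemma sum_le n (F : 'I_n -> bool) k :
  (forall j : 'I_n, (k <= j)%N -> ~~ F j) -> (\sum_j (F j : nat) <= k)%N.
Proof.
move=> H; apply: (@leq_trans (\sum_(j < n) ((j < k)%N : nat))).
  apply: leq_sum => j _; case E: (F j) => //=.
  by case: (ltnP j k) => // /H; rewrite E.
by rewrite sum_cnt_lt geq_minl.
Qed.

Lemma sorted_ord n (f : 'I_n -> nat) :
  (forall a b : 'I_n, (a < b)%N -> (f a < f b)%N) -> sorted ltn (map f (enum 'I_n)).
Proof.
move=> Hf; rewrite sorted_map.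
apply: (@sub_sorted _ (relpre val ltn)); first by move=> a b /=; exact: Hf.
rewrite -sorted_map val_enum_ord; exact: iota_ltn_sorted.
Qed.

Theorem mainTheorem5 (m n : nat) (A B : 'M[bool]_(m, n)) :
  sorted_flushed A B -> (cs A = cs (mxbar B) <-> PC A B).
Proof.
move=> [[sA sB] F]; rewrite /flushed_pair /bottom_left_flushed in F.
set d := fun j : 'I_n => \sum_(i < m) ((~~ B i j) : nat).
set T := fun j : 'I_n => j.+1 + d j.
have csbar : forall j, cs (mxbar B) j = d j.
  by move=> j; rewrite /cs ffunE /d; apply: eq_bigr => i _; rewrite mxE.
have dmono : forall j1 j2 : 'I_n, (j1 <= j2)%N -> (d j1 <= d j2)%N.
  move=> j1 j2 le; apply: leq_sum => i _.
  case E: (B i j2); last by case: (B i j1).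
  by rewrite (F i i j2 j1 E (leqnn _) le).
have Tinc : forall a b : 'I_n, (a < b)%N -> (T a < T b)%N.
  move=> a b ab; have := dmono a b (ltnW ab); rewrite /T; lia.
have dm : forall j, (d j <= m)%N by move=> j; apply: sum_le => i; rewrite leqNgt ltn_ord.
have rn : forall i : 'I_m, (\sum_(j < n) (B i j : nat) <= n)%N.
  by move=> i; apply: sum_le => j; rewrite leqNgt ltn_ord.
have disj : forall (i : 'I_m) (j : 'I_n), T j != ars B i.
  move=> i j; rewrite /T /ars.
  case E: (B i j).
  - have h1 : (j.+1 <= \sum_(j' < n) (B i j' : nat))%N.
      apply: sum_ge => // j' le; exact: (F i i j j' E (leqnn _) le).
    have h2 : (d j <= i)%N.
      apply: sum_le => i' le; by rewrite (F i i' j j E le (leqnn _)).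
    apply/eqP; lia.
  - have h1 : (\sum_(j' < n) (B i j' : nat) <= j)%N.
      apply: sum_le => j' le; apply/negP => E'.
      by rewrite (F i i j' j E' (leqnn _) le) in E.
    have h2 : (i.+1 <= d j)%N.
      apply: sum_ge => // i' le; apply/negP => E'.
      by rewrite (F i' i j j E' le (leqnn _)) in E.
    apply/eqP; lia.
set Tl := map T (enum 'I_n).
set Sl := map (ars B) (enum 'I_m).
have sT : sorted ltn Tl by apply: sorted_ord.
have sS : sorted ltn Sl by apply: sorted_ord.
have uT : uniq Tl by apply: (sorted_uniq ltn_trans ltnn).
have uS : uniq Sl by apply: (sorted_uniq ltn_trans ltnn).
have uTS : uniq (Tl ++ Sl).
  rewrite cat_uniq uT uS andbT; apply/hasPn => x /mapP [i _ ->].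
  apply/mapP => [[j _ E]]; by move: (disj i j); rewrite E eqxx.
have subTS : {subset Tl ++ Sl <= iota 1 (m + n)}.
  move=> x; rewrite mem_cat mem_iota => /orP [] /mapP [k _ ->].
  - have := dm k; have := ltn_ord k; rewrite /T; lia.
  - have := rn k; have := ltn_ord k; rewrite /ars; lia.
have TS : Tl ++ Sl =i iota 1 (m + n).
  have sz : (size (iota 1 (m + n)) <= size (Tl ++ Sl))%N.
    by rewrite size_iota size_cat /Tl /Sl !size_map -?enumT !size_enum_ord addnC.
  exact: (uniq_min_size uTS subTS sz).2.
split.
- move=> Hcs; rewrite /PC.
  have -> : [seq acs A j | j <- enum 'I_n] = Tl.
    apply: eq_map => j; by rewrite /acs /T -csbar -Hcs /cs ffunE.
  exact: TS.
- move=> H; rewrite /PC in H.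
  set Al := [seq acs A j | j <- enum 'I_n] in H.
  have sA' : sorted ltn Al by apply: sorted_ord.
  have uA : uniq Al by apply: (sorted_uniq ltn_trans ltnn).
  have uAS : uniq (Al ++ Sl).
    apply: (leq_size_uniq (iota_uniq 1 (m + n))).
      by move=> x; rewrite -H.
    by rewrite size_iota size_cat !size_map -?enumT !size_enum_ord addnC.
  have subAT : {subset Al <= Tl}.
    move=> x xA.
    have : x \in iota 1 (m + n) by rewrite -H mem_cat xA.
    rewrite -TS mem_cat => /orP [] // xS.
    move: uAS; rewrite cat_uniq => /and3P [_ /hasPn Hh _].
    by move: (Hh x xS); rewrite xA.
  have szA : (size Tl <= size Al)%N by rewrite /Tl /Al !size_map.
  have eqAT := (uniq_min_size uA subAT szA).2.
  have E := irr_sorted_eq ltn_trans ltnn sA' sT eqAT.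
  apply/ffunP => j; rewrite csbar.
  have := (eq_in_map _ _ _).2 E j (mem_enum _ j).
  by rewrite /acs /T /cs ffunE; move/addnI.
Qed.
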